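(* Consider the algorithm described in the context, suppose it does not terminate finitely, and suppose there is $\sigma_{\min}>0$ with $\sigma_{\min}(J_k)\ge\sigma_{\min}$ for all $k\in\mathbb{N}$ (smallest singular value). If $J_k^Tc_k\ne0$, then $\|c_k+J_ks_k\|_2\le\rho_k\|c_k\|_2$, where $$\rho_k:=\sqrt{\max\big\{1-\kappa_v\alpha_k\sigma_{\min}^2,\ 1-\sigma_{\min}^2/\kappa_{\nabla c}^2\big\}}\in[0,1).$$
   Context: Problem: $\min_{x\in\mathbb{R}^n} f(x)+r(x)$ subject to $c(x)=0$, where $f:\mathbb{R}^n\to\mathbb{R}$ and $c:\mathbb{R}^n\to\mathbb{R}^m$ ($m\le n$) are continuously differentiable and $r:\mathbb{R}^n\to\mathbb{R}_{\ge 0}$ is convex. Write $g(x)=\nabla f(x)$, $J(x)=\nabla c(x)^T$, and $f_k=f(x_k)$, $g_k=g(x_k)$, $c_k=c(x_k)$, $J_k=J(x_k)$, $r_k=r(x_k)$. All norms are Euclidean (spectral norm for matrices). Merit function: $\Phi_\tau(x)=\tau(f(x)+r(x))+\|c(x)\|_2$. Algorithm: inputs $x_0$, $\alpha_0>0$, $\tau_{-1}>0$; constants $\kappa_v>0$, $\sigma_c,\epsilon_\tau,\xi,\eta\in(0,1)$, $\sigma_u\in(0,1/2]$, $\bar\sigma_u:=\sigma_u+\tfrac12$. For $k=0,1,\dots$: 1. If $J_k^Tc_k\ne0$, compute $v_k$ with $v_k\in\mathrm{Range}(J_k^T)$, $\|v_k\|_2\le\kappa_v\alpha_k\|J_k^Tc_k\|_2$,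 $\|c_k+J_kv_k\|_2\le\|c_k+J_kv_k^c\|_2$, where $v_k^c=-\beta_k^cJ_k^Tc_k$ with $\beta_k^c$ minimizing $\tfrac12\|c_k-\beta J_kJ_k^Tc_k\|_2^2$ over $0\le\beta\le\kappa_v\alpha_k$. Otherwise set $v_k=0$, and if $c_k\ne0$ terminate. 2. Let $u_k$ be the unique minimizer of $g_k^Tu+\tfrac1{2\alpha_k}\|u\|_2^2+r(x_k+v_k+u)$ subject to $J_ku=0$; set $s_k=v_k+u_k$. If $s_k=0$, terminate. 3. Let $D_k:=g_k^Ts_k+\bar\sigma_u\|s_k\|_2^2/\alpha_k+r(x_k+s_k)-r_k$; $\tau_{k,\mathrm{trial}}=\infty$ if $D_k\le0$, else $\tau_{k,\mathrm{trial}}=(1-\sigma_c)(\|c_k\|_2-\|c_k+J_kv_k\|_2)/D_k$. Set $\tau_k=\tau_{k-1}$ if $\tau_{k-1}\le\tau_{k,\mathrm{trial}}$, else $\tau_k=\min\{(1-\epsilon_\tau)\tau_{k-1},\tau_{k,\mathrm{trial}}\}$. 4. With $\Delta q_k(s,\tau):=-\tau(g_k^Ts+\tfrac1{2\alpha_k}\|s\|_2^2+r(x_k+s)-r_k)+\|c_k\|_2-\|c_k+J_ks\|_2$: if $\Phi_{\tau_k}(x_k+s_k)\le\Phi_{\tau_k}(x_k)-\eta\Delta q_k(s_k,\tau_k)$ set $x_{k+1}=x_k+s_k$, $\alpha_{k+1}=\alpha_k$; else $x_{k+1}=x_k$, $\alpha_{k+1}=\xi\alpha_k$. Standing assumption: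 there is an open convex set $\mathcal X$ containing all iterates $x_k$ and trial points $x_k+s_k$ such that $f$ is bounded below on $\mathcal X$, $\nabla f$ is bounded and Lipschitz continuous on $\mathcal X$, $c$ is bounded on $\mathcal X$, $\|J(x)\|_2\le\kappa_{\nabla c}$ for $x\in\mathcal X$ (constant $\kappa_{\nabla c}>0$) and $J$ is Lipschitz on $\mathcal X$, and all subgradients of $r$ at points of $\mathcal X$ are uniformly bounded in norm. *)

(* Defs.v *)
From HB Require Import structures.
From mathcomp Require Import all_boot all_order all_algebra.
From mathcomp Require Import all_classical all_reals all_analysis.
Set Implicit Arguments. Unset Strict Implicit. Unset Printing Implicit Defensive.
Import Order.TTheory GRing.Theory Num.Theory.
Import numFieldNormedType.Exports.
Local Open Scope classical_set_scope.
Local Open Scope ring_scope.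

Section Defs.
Variable R : realType.

Definition enorm (p : nat) (v : 'cV[R]_p) : R := Num.sqrt (\sum_i (v i 0) ^+ 2).

Definition dotp (p : nat) (u v : 'cV[R]_p) : R := (u^T *m v) 0 0.

(* smallest singular value of J : 'M_(m,n) with m <= n, i.e. min_{||w||=1} ||J^T w|| *)
Definition sigma_min (m n : nat) (J : 'M[R]_(m, n)) : R :=
  inf [set enorm (J^T *m w) | w in [set w : 'cV[R]_m | enorm w = 1]].

Definition specnorm_le (m n : nat) (A : 'M[R]_(m, n)) (L : R) : Prop :=
  forall v : 'cV[R]_n, enorm (A *m v) <= L * enorm v.

Definition is_gradient (n : nat) (f : 'cV[R]_n -> R) (g : 'cV[R]_n -> 'cV[R]_n) :=
  forall x, differentiable f x /\ forall h, 'd f x h = dotp (g x) h.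

Definition is_jacobian (m n : nat) (c : 'cV[R]_n -> 'cV[R]_m) (J : 'cV[R]_n -> 'M[R]_(m, n)) :=
  forall x, differentiable c x /\ forall h, 'd c x h = J x *m h.

Definition convex_fun (n : nat) (r : 'cV[R]_n -> R) :=
  forall x y (t : R), 0 <= t <= 1 ->
    r ((1 - t) *: x + t *: y) <= (1 - t) * r x + t * r y.

Definition convex_set (n : nat) (X : set 'cV[R]_n) :=
  forall x y (t : R), X x -> X y -> 0 <= t <= 1 -> X ((1 - t) *: x + t *: y).

Definition subgradient (n : nat) (r : 'cV[R]_n -> R) (x z : 'cV[R]_n) :=
  forall y, r x + dotp z (y - x) <= r y.

Definition standing_assumption (m n : nat) (f : 'cV[R]_n -> R) (g : 'cV[R]_n -> 'cV[R]_n)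
  (c : 'cV[R]_n -> 'cV[R]_m) (J : 'cV[R]_n -> 'M[R]_(m, n)) (r : 'cV[R]_n -> R)
  (kappa_c : R) (x s : nat -> 'cV[R]_n) : Prop :=
  exists X : set 'cV[R]_n,
    open X /\ convex_set X /\
        (forall k, X (x k) /\ X (x k + s k)) /\
        (exists lb : R, forall y, X y -> lb <= f y) /\
        (exists B : R, forall y, X y -> enorm (g y) <= B) /\
        (exists L : R, forall y z, X y -> X z -> enorm (g y - g z) <= L * enorm (y - z)) /\
        (exists B : R, forall y, X y -> enorm (c y) <= B) /\
        (forall y, X y -> specnorm_le (J y) kappa_c) /\
        (exists L : R, forall y z, X y -> X z -> specnorm_le (J y - J z) (L * enorm (y - z))) /\
        (exists B : R, forall y z, X y -> subgradient r y z -> enorm z <= B).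

(* The iteration of the algorithm: sequences x, alpha, tau (tau k = tau_k,
   tau_{-1} = tau_m1), v, u, s, generated by steps 1-4, without termination. *)
Definition algorithm_run (m n : nat) (f : 'cV[R]_n -> R) (g : 'cV[R]_n -> 'cV[R]_n)
  (c : 'cV[R]_n -> 'cV[R]_m) (J : 'cV[R]_n -> 'M[R]_(m, n)) (r : 'cV[R]_n -> R)
  (kappa_v sigma_c eps_tau xi eta sigma_u tau_m1 : R)
  (x : nat -> 'cV[R]_n) (alpha tau : nat -> R) (v u s : nat -> 'cV[R]_n) : Prop :=
  let sigma_ubar := sigma_u + 2^-1 in
  let Phi (t : R) (y : 'cV[R]_n) := t * (f y + r y) + enorm (c y) in
  forall k : nat,
  let xk := x k in let ak := alpha k in
  let gk := g xk in let ck := c xk in let Jk := J xk in let rk := r xk in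
  let tau_prev := if k is k'.+1 then tau k' else tau_m1 in
  let dq (sd : 'cV[R]_n) (t : R) :=
    - t * (dotp gk sd + (2 * ak)^-1 * enorm sd ^+ 2 + r (xk + sd) - rk)
    + enorm ck - enorm (ck + Jk *m sd) in
  (
   (Jk^T *m ck != 0 ->
      [/\ exists w : 'cV[R]_m, v k = Jk^T *m w,
          enorm (v k) <= kappa_v * ak * enorm (Jk^T *m ck)
        & exists beta : R,
            [/\ 0 <= beta <= kappa_v * ak,
                (forall b : R, 0 <= b <= kappa_v * ak ->
                   2^-1 * enorm (ck - beta *: (Jk *m Jk^T *m ck)) ^+ 2
                   <= 2^-1 * enorm (ck - b *: (Jk *m Jk^T *m ck)) ^+ 2)
              & enorm (ck + Jk *m v k)
                <= enorm (ck + Jk *m (- beta *: (Jk^T *m ck)))]]) /\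
   (Jk^T *m ck = 0 -> v k = 0 /\ ck = 0) /\  (* no termination in step 1 *)
   [/\ Jk *m u k = 0,
       (forall u' : 'cV[R]_n, Jk *m u' = 0 ->
          dotp gk (u k) + (2 * ak)^-1 * enorm (u k) ^+ 2 + r (xk + v k + u k)
          <= dotp gk u' + (2 * ak)^-1 * enorm u' ^+ 2 + r (xk + v k + u'))
     & s k = v k + u k] /\
   s k != 0 /\  (* no termination in step 2 *)
   (let Dk := dotp gk (s k) + sigma_ubar * enorm (s k) ^+ 2 / ak + r (xk + s k) - rk in
    if Dk <= 0 then tau k = tau_prev
    else let trial := (1 - sigma_c) * (enorm ck - enorm (ck + Jk *m v k)) / Dk in
         tau k = (if tau_prev <= trial then tau_prev
                  else Num.min ((1 - eps_tau) * tau_prev) trial)) /\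
   (if Phi (tau k) (xk + s k) <= Phi (tau k) xk - eta * dq (s k) (tau k)
    then x k.+1 = xk + s k /\ alpha k.+1 = ak
    else x k.+1 = xk /\ alpha k.+1 = xi * ak)).

End Defs.

(* Main.v *)
Require Import Defs.
From HB Require Import structures.
From mathcomp Require Import all_boot all_order all_algebra.
From mathcomp Require Import all_classical all_reals all_analysis.
From mathcomp Require Import ring lra.
Import Order.TTheory GRing.Theory Num.Theory.
Import numFieldNormedType.Exports.
Local Open Scope classical_set_scope.
Local Open Scope ring_scope.

Section H.
Variable R : realType.

Lemma dotpE (p : nat) (u v : 'cV[R]_p) : dotp u v = \sum_i u i 0 * v i 0.
Proof. by rewrite /dotp mxE; apply: eq_bigr => i _; rewrite mxE. Qed.

Lemma dotp_ge0 (p : nat) (u : 'cV[R]_p) : 0 <= dotp u u.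
Proof. rewrite dotpE; apply: sumr_ge0 => i _; by rewrite -expr2 sqr_ge0. Qed.

Lemma enormE (p : nat) (u : 'cV[R]_p) : enorm u = Num.sqrt (dotp u u).
Proof. by rewrite /enorm dotpE; congr Num.sqrt; apply: eq_bigr => i _; rewrite expr2. Qed.

Lemma enorm_sq (p : nat) (u : 'cV[R]_p) : enorm u ^+ 2 = dotp u u.
Proof. by rewrite enormE sqr_sqrtr // dotp_ge0. Qed.

Lemma enorm_ge0 (p : nat) (u : 'cV[R]_p) : 0 <= enorm u.
Proof. by rewrite enormE sqrtr_ge0. Qed.

Lemma dotp_expand (p : nat) (c y : 'cV[R]_p) (b : R) :
  dotp (c - b *: y) (c - b *: y) = dotp c c - 2 * b * dotp c y + b ^+ 2 * dotp y y.
Proof.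
rewrite !dotpE.
transitivity (\sum_i (c i 0 * c i 0 - 2 * b * (c i 0 * y i 0) + b ^+ 2 * (y i 0 * y i 0))).
  by apply: eq_bigr => i _; rewrite !mxE; ring.
by rewrite big_split sumrB /= -!mulr_sumr.
Qed.

Lemma dotpZ (p : nat) (y : 'cV[R]_p) (a : R) :
  dotp (a *: y) (a *: y) = a ^+ 2 * dotp y y.
Proof.
rewrite !dotpE mulr_sumr; apply: eq_bigr => i _; rewrite !mxE; ring.
Qed.

Lemma enormZ (p : nat) (y : 'cV[R]_p) (a : R) : enorm (a *: y) = `|a| * enorm y.
Proof. by rewrite !enormE dotpZ sqrtrM ?sqr_ge0 // sqrtr_sqr. Qed.

Lemma dotp_trmx (m n : nat) (J : 'M[R]_(m, n)) (c : 'cV[R]_m) (w : 'cV[R]_n) :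
  dotp c (J *m w) = dotp (J^T *m c) w.
Proof. by rewrite /dotp trmx_mul trmxK mulmxA. Qed.

Lemma dotp_eq0 (p : nat) (u : 'cV[R]_p) : dotp u u = 0 -> u = 0.
Proof.
rewrite dotpE => /eqP; rewrite psumr_eq0; last by move=> i _; rewrite -expr2 sqr_ge0.
move=> /allP H; apply/matrixP => i j; rewrite (ord1 j) mxE.
have := H i (mem_index_enum _); rewrite implyTb -expr2 sqrf_eq0 => /eqP //.
Qed.

End H.
Arguments enorm_ge0 {R p} u.
Arguments dotp_ge0 {R p} u.
Arguments dotp_eq0 {R p u}.
Arguments enorm_sq {R p} u.
Arguments enormE {R p} u.
Arguments dotp_expand {R p} c y b.
Arguments enormZ {R p} y a.
Arguments dotp_trmx {R m n} J c w.

Theorem lemma3p12 (R : realType) (m n : nat) (hmn : (m <= n)%N)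
  (f : 'cV[R]_n -> R) (g : 'cV[R]_n -> 'cV[R]_n)
  (c : 'cV[R]_n -> 'cV[R]_m) (J : 'cV[R]_n -> 'M[R]_(m, n)) (r : 'cV[R]_n -> R)
  (kappa_c kappa_v sigma_c eps_tau xi eta sigma_u tau_m1 alpha0 sigmin : R)
  (x : nat -> 'cV[R]_n) (alpha tau : nat -> R) (v u s : nat -> 'cV[R]_n) :
  is_gradient f g -> continuous g ->
  is_jacobian c J -> continuous J ->
  (forall y, 0 <= r y) -> convex_fun r ->
  0 < kappa_c ->
  standing_assumption f g c J r kappa_c x s ->
  0 < alpha0 -> 0 < tau_m1 -> 0 < kappa_v ->
  0 < sigma_c < 1 -> 0 < eps_tau < 1 -> 0 < xi < 1 -> 0 < eta < 1 ->
  0 < sigma_u <= 2^-1 ->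
  alpha 0%N = alpha0 ->
  algorithm_run f g c J r kappa_v sigma_c eps_tau xi eta sigma_u tau_m1 x alpha tau v u s ->
  0 < sigmin -> (forall k, sigmin <= sigma_min (J (x k))) ->
  forall k : nat, (J (x k))^T *m c (x k) != 0 ->
    let rho := Num.sqrt (Num.max (1 - kappa_v * alpha k * sigmin ^+ 2)
                                 (1 - sigmin ^+ 2 / kappa_c ^+ 2)) in
    [/\ 0 <= rho, rho < 1 &
        enorm (c (x k) + J (x k) *m s k) <= rho * enorm (c (x k))].
Proof.
move=> _ _ _ _ _ _ kc_gt0 SA a0_gt0 _ kv_gt0 _ _ /andP[xi_gt0 _] _ _ Ha0 Hrun
  sg_gt0 Hsig k Hw rho.
have apos : forall j, 0 < alpha j.
  elim=> [|j IH]; first by rewrite Ha0.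
  move: (Hrun j) => /= [_ [_ [_ [_ [_ H4]]]]].
  by case: ifP H4 => _ [_ ->] //; rewrite mulr_gt0.
have ak_gt0 := apos k.
rewrite {}/rho; set M := Num.max _ _.
have M_lt1 : M < 1.
  rewrite gt_max; apply/andP; split.
    have : 0 < kappa_v * alpha k * sigmin ^+ 2 by rewrite !mulr_gt0 // exprn_gt0.
    lra.
  have : 0 < sigmin ^+ 2 / kappa_c ^+ 2 by rewrite mulr_gt0 // ?invr_gt0 exprn_gt0.
  lra.
split; first exact: sqrtr_ge0.
  by rewrite -(sqrtr1 R) ltr_sqrt.
case: SA => X [_ [_ [HX [_ [_ [_ [_ [Hspec _]]]]]]]].
have HspecK := Hspec _ (proj1 (HX k)).
move: (Hrun k) => /= [H1 [_ [[HJu _ Hs] _]]].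
have [_ _ [beta [hb hmin hv]]] := H1 Hw.
set C := c (x k) in Hw hv hmin *.
set Jk := J (x k) in Hw hv hmin HspecK Hsig *.
set w := Jk^T *m C in Hw hv hmin *.
have Ey : Jk *m Jk^T *m C = Jk *m w by rewrite -mulmxA.
rewrite Ey in hmin.
have Ev : C + Jk *m s k = C + Jk *m v k by rewrite Hs mulmxDr HJu addr0.
rewrite Ev.
have E2 : C + Jk *m (- beta *: w) = C - beta *: (Jk *m w)
  by rewrite -scalemxAr scaleNr.
rewrite E2 in hv.
have C_neq0 : C != 0.
  by apply: contraNneq Hw => hC; rewrite /w hC mulmx0.
set P := dotp C C.
have P_gt0 : 0 < P.
  rewrite lt0r dotp_ge0 andbT; apply: contraNneq C_neq0 => /eqP.
  by move=> /eqP /dotp_eq0 ->.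
set W := dotp w w.
set Y := dotp (Jk *m w) (Jk *m w).
have W_ge0 : 0 <= W by exact: dotp_ge0.
have HY : Y <= kappa_c ^+ 2 * W.
  have h := HspecK w.
  have := ler_pM (enorm_ge0 _) (enorm_ge0 _) h h.
  rewrite -!expr2 /Y /W -!enorm_sq => h2; rewrite (le_trans h2) //.
  by rewrite exprMn.
have HCy : dotp C (Jk *m w) = W by rewrite dotp_trmx.
have eC_gt0 : 0 < enorm C by rewrite enormE sqrtr_gt0.
have HW : sigmin ^+ 2 * P <= W.
  have h1 : sigmin <= enorm w / enorm C.
    apply: (le_trans (Hsig k)); rewrite /sigma_min.
    apply: ge_inf.
      by exists 0 => z [w' _ <-]; exact: enorm_ge0.
    exists ((enorm C)^-1 *: C).
      by rewrite /= enormZ ger0_norm ?invr_ge0 ?ltW // mulVf // gt_eqF.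
    by rewrite -scalemxAr enormZ ger0_norm ?invr_ge0 ?ltW // mulrC.
  have h2 : sigmin * enorm C <= enorm w by rewrite -ler_pdivlMr.
  have := ler_pM (mulr_ge0 (ltW sg_gt0) (ltW eC_gt0)) (mulr_ge0 (ltW sg_gt0) (ltW eC_gt0)) h2 h2.
  by rewrite -!expr2 exprMn /P /W -!enorm_sq.
have hv2 : dotp (C + Jk *m v k) (C + Jk *m v k)
    <= dotp (C - beta *: (Jk *m w)) (C - beta *: (Jk *m w)).
  by rewrite -!enorm_sq !expr2; apply: ler_pM; rewrite ?enorm_ge0.
have key : forall b, 0 <= b <= kappa_v * alpha k -> b * kappa_c ^+ 2 <= 1 ->
    1 - b * sigmin ^+ 2 <= M ->
    dotp (C + Jk *m v k) (C + Jk *m v k) <= M * P.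
  move=> b hbb hbk hbM.
  have := hmin b hbb.
  rewrite ler_pM2l ?invr_gt0 // !enorm_sq => h3.
  have h4 := le_trans hv2 h3.
  rewrite !dotp_expand HCy -/P -/Y in h4.
  apply: (le_trans h4).
  case/andP: hbb => hb0 hb1.
  have h5 : b ^+ 2 * Y <= b * W.
    apply: (le_trans (ler_wpM2l (sqr_ge0 b) HY)).
    rewrite (_ : b ^+ 2 * (kappa_c ^+ 2 * W) = (b * kappa_c ^+ 2) * (b * W)); last by ring.
    by rewrite ler_piMl // mulr_ge0.
  have h6 : b * (sigmin ^+ 2 * P) <= b * W by rewrite ler_wpM2l.
  have h7 : (1 - b * sigmin ^+ 2) * P <= M * P by rewrite ler_wpM2r // ltW.
  lra.
have Hfin : dotp (C + Jk *m v k) (C + Jk *m v k) <= M * P.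
  have [h|h] := leP (kappa_v * alpha k) (kappa_c ^+ 2)^-1.
    apply: (key (kappa_v * alpha k)).
    - by rewrite lexx andbT mulr_ge0 // ltW.
    - by rewrite -ler_pdivlMr ?exprn_gt0 // mul1r.
    - by rewrite le_max lexx.
  apply: (key (kappa_c ^+ 2)^-1).
  - by rewrite invr_ge0 sqr_ge0 (ltW h).
  - by rewrite mulVf // expf_neq0 // gt_eqF.
  - by rewrite le_max mulrC lexx orbT.
have M_ge0 : 0 <= M.
  have := le_trans (dotp_ge0 _) Hfin.
  by rewrite pmulr_lge0.
rewrite enormE (enormE C) -sqrtrM //.
exact: ler_wsqrtr.
Qed.
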